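(* Let $Y$ be a Banach space with norm $\|\cdot\|_{y}$, $X\subset Y$ a non-empty set and $\mathcal{T}:X\rightarrow X$ a given operator. Define $X_{\infty}\subset Y$ as the set of all $U\in Y$ for which there exist a sequence $\{U^{k}\}\subset X$ and $V\in Y$ such that $U^{k}\rightarrow U$ and $\mathcal{T}(U^{k})\rightarrow V$ in $Y$. Assume: (i) $\mathcal{T}$ admits a well-defined extension $\widehat{\mathcal{T}}:X_{\infty}\rightarrow Y$ given by $\widehat{\mathcal{T}}(U)=V$, where $V$ is the limit in $Y$ of $\mathcal{T}(U^{k})$ for a sequence $\{U^{k}\}\subset X$ with $U^{k}\rightarrow U$ in $Y$; that is, $V$ is independent of the sequence in $X$ converging to $U$; (ii) there is a constant $0<\alpha_{0}<\frac{1}{2}$ such that for all $U_{1},U_{2}\in X$, $$\|\mathcal{T}^{2}(U_{2})-\mathcal{T}^{2}(U_{1})\|_{y}\leq\alpha_{0}\left\{\|\mathcal{T}(U_{2})-\mathcal{T}(U_{1})\|_{y}+\|U_{2}-U_{1}\|_{y}\right\}.$$ Then $\widehat{\mathcal{T}}(X_{\infty})\subseteq X_{\infty}$, $\widehat{\mathcal{T}}$ satisfies the inequality in (ii) for all $U_{1},U_{2}\in X_{\infty}$, and there is a unique $U_{\infty}\in X_{\infty}$ with $\widehat{\mathcal{T}}(U_{\infty})=U_{\infty}$.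
   Context: This is an abstract metric fixed point theorem; the iteration inequality of type $a_{k}\leq\alpha_{0}(a_{k-1}+a_{k-2})$ with $0<\alpha_{0}<1/2$ implies $\sum_{k}a_{k}<\infty$. *)

(* Defs.v *)
From HB Require Import structures.
From mathcomp Require Import all_boot all_order all_algebra.
From mathcomp Require Import all_classical all_reals all_analysis.
Set Implicit Arguments. Unset Strict Implicit. Unset Printing Implicit Defensive.
Import Order.TTheory GRing.Theory Num.Theory.
Import numFieldNormedType.Exports.
Local Open Scope classical_set_scope.
Local Open Scope ring_scope.

Definition ext_rel {R : realType} {Y : completeNormedModType R}
  (X : set Y) (T : Y -> Y) (U V : Y) : Prop :=
  exists u : nat -> Y, (forall k, X (u k)) /\ u @ \oo --> U /\
                        (fun k => T (u k)) @ \oo --> V.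

Definition X_infty {R : realType} {Y : completeNormedModType R}
  (X : set Y) (T : Y -> Y) : set Y :=
  [set U | exists V, ext_rel X T U V].

(* Main.v *)
Require Import Defs.
From HB Require Import structures.
From mathcomp Require Import all_boot all_order all_algebra.
From mathcomp Require Import all_classical all_reals all_analysis.
From mathcomp Require Import ring lra.
Import Order.TTheory GRing.Theory Num.Theory.
Import numFieldNormedType.Exports.
Local Open Scope classical_set_scope.
Local Open Scope ring_scope.

Lemma cauchy_comb (R : realType) (Y : completeNormedModType R)
  (u v w : nat -> Y) (c : R) (a b : Y) : 0 < c ->
  u @ \oo --> a -> v @ \oo --> b ->
  (forall n m, `|w n - w m| <= c * (`|v n - v m| + `|u n - u m|)) ->
  cvgn w.
Proof.
move=> c0 ua vb H.
apply/cauchy_cvgP; apply/cauchy_ballP => e e0; near_simpl.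
have e' : 0 < e / (4 * c) by rewrite divr_gt0 // mulr_gt0.
move/cvgrPdist_lt: ua => /(_ _ e') [N1 _ HN1].
move/cvgrPdist_lt: vb => /(_ _ e') [N2 _ HN2].
exists ([set n | maxn N1 N2 <= n]%N, [set n | maxn N1 N2 <= n]%N).
  by split; exists (maxn N1 N2).
move=> [n m] [/= Nn Nm]; rewrite -ball_normE /=.
apply: (le_lt_trans (H _ _)).
have P1 k : (maxn N1 N2 <= k)%N -> `|a - u k| < e / (4 * c).
  by move=> Hk; apply: HN1; rewrite /= (leq_trans _ Hk) // leq_maxl.
have P2 k : (maxn N1 N2 <= k)%N -> `|b - v k| < e / (4 * c).
  by move=> Hk; apply: HN2; rewrite /= (leq_trans _ Hk) // leq_maxr.
have Hu : `|u n - u m| < e / (4 * c) + e / (4 * c).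
  rewrite (_ : u n - u m = (a - u m) - (a - u n)); last by rewrite [RHS]addrC opprB addrA subrK.
  by apply: (le_lt_trans (ler_normB _ _)); rewrite addrC ltrD // ?P1.
have Hv : `|v n - v m| < e / (4 * c) + e / (4 * c).
  rewrite (_ : v n - v m = (b - v m) - (b - v n)); last by rewrite [RHS]addrC opprB addrA subrK.
  by apply: (le_lt_trans (ler_normB _ _)); rewrite addrC ltrD // ?P2.
have -> : e = c * (e / (4 * c) + e / (4 * c) + (e / (4 * c) + e / (4 * c))).
  by field; rewrite gt_eqF.
by rewrite ltr_pM2l // ltrD.
Qed.
Lemma iter_cvg (R : realType) (Y : completeNormedModType R) (x : nat -> Y) (alpha : R) :
  0 < alpha -> alpha < 1/2 ->
  (forall n, `|x n.+3 - x n.+2| <= alpha * (`|x n.+2 - x n.+1| + `|x n.+1 - x n|)) ->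
  cvgn x.
Proof.
move=> a0 a1 H.
pose r := 1/2 + alpha.
have r0 : 0 < r by rewrite /r; lra.
have r1 : r < 1 by rewrite /r; lra.
have rr : alpha * (r + 1) <= r ^+ 2.
  have -> : r ^+ 2 = alpha * (r + 1) + (1/4 - alpha / 2) by rewrite /r; field.
  by rewrite lerDl; lra.
pose a n := `|x n.+1 - x n|.
pose M := a 0%N + a 1%N / r.
have M0 : 0 <= M.
  by rewrite /M /a; apply: addr_ge0 => //; apply: divr_ge0 => //; apply: ltW.
have key n : a n <= M * r ^+ n /\ a n.+1 <= M * r ^+ n.+1.
  elim: n => [|n [IH1 IH2]].
    rewrite expr0 mulr1 expr1; split.
      by rewrite /M lerDl; exact: divr_ge0 (normr_ge0 _) (ltW r0).
    rewrite /M mulrDl mulfVK ?gt_eqF // lerDr; exact: mulr_ge0 (normr_ge0 _) (ltW r0).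
  split => //.
  apply: (le_trans (H n)).
  apply: (le_trans (ler_wpM2l (ltW a0) (lerD IH2 IH1))).
  rewrite -[M * r ^+ n.+1 + M * r ^+ n]/(M * r ^+ n.+1 + M * r ^+ n).
  have -> : M * r ^+ n.+1 + M * r ^+ n = (M * r ^+ n) * (r + 1) by rewrite exprS; ring.
  have -> : M * r ^+ n.+2 = (M * r ^+ n) * r ^+ 2 by rewrite !exprS; ring.
  rewrite mulrCA ler_wpM2l // mulr_ge0 // exprn_ge0 // ltW.
  by []. exact: r0.
have ct : cvgn (series (telescope x)).
  apply: normed_cvg.
  apply: (@series_le_cvg _ _ (geometric M r)).
  - by move=> k /=.
  - by move=> k; rewrite /geometric /=; apply: mulr_ge0 => //; apply: exprn_ge0; apply: ltW.
  - by move=> k /=; exact: (key k).1.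
  - by apply: is_cvg_geometric_series; rewrite ger0_norm //; apply: ltW.
have -> : x = (fun n => x 0%N + series (telescope x) n).
  by apply: funext => n; exact: eq_sum_telescope.
by apply: is_cvgD => //; exact: is_cvg_cst.
Qed.

Theorem theorem5p1 (R : realType) (Y : completeNormedModType R)
  (X : set Y) (T : Y -> Y) (alpha0 : R) (That : Y -> Y) :
  X !=set0 ->
  (forall U, X U -> X (T U)) ->
  (* (i) the extension is well defined *)
  (forall U V1 V2, ext_rel X T U V1 -> ext_rel X T U V2 -> V1 = V2) ->
  (* (ii) *)
  0 < alpha0 -> alpha0 < 1 / 2 ->
  (forall U1 U2, X U1 -> X U2 ->
     `|T (T U2) - T (T U1)| <= alpha0 * (`|T U2 - T U1| + `|U2 - U1|)) ->
  (* That is the extension of T to X_infty *)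
  (forall U, X_infty X T U -> ext_rel X T U (That U)) ->
  [/\ (forall U, X_infty X T U -> X_infty X T (That U)),
      (forall U1 U2, X_infty X T U1 -> X_infty X T U2 ->
         `|That (That U2) - That (That U1)|
           <= alpha0 * (`|That U2 - That U1| + `|U2 - U1|))
    & exists Uinf, [/\ X_infty X T Uinf, That Uinf = Uinf &
         forall W, X_infty X T W -> That W = W -> W = Uinf]].
Proof.
move=> Xne TX wd a0 a1 Hii Hext.
have step U : X_infty X T U -> exists u : nat -> Y,
   [/\ forall k, X (u k), u @ \oo --> U, (fun k => T (u k)) @ \oo --> That U,
       (fun k => T (T (u k))) @ \oo --> That (That U) & X_infty X T (That U)].
  move=> XU; have [u [Xu [uU TuV]]] := Hext U XU.
  have cw : cvgn (fun k => T (T (u k))).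
    apply: (@cauchy_comb R Y u (fun k => T (u k)) _ alpha0 U (That U)) => //.
    by move=> n m; apply: Hii.
  have eV : ext_rel X T (That U) (limn (fun k => T (T (u k)))).
    by exists (fun k => T (u k)); split => //; move=> k; apply: TX.
  have XV : X_infty X T (That U) by exists (limn (fun k => T (T (u k)))).
  exists u; split => //.
  by rewrite (wd _ _ _ (Hext _ XV) eV).
have P1 U : X_infty X T U -> X_infty X T (That U).
  by move=> /step [u [_ _ _ _ ?]].
have P2 U1 U2 : X_infty X T U1 -> X_infty X T U2 ->
         `|That (That U2) - That (That U1)|
           <= alpha0 * (`|That U2 - That U1| + `|U2 - U1|).
  move=> /step [u1 [X1 c1 d1 e1 _]] /step [u2 [X2 c2 d2 e2 _]].
  apply: (@ler_cvg_to nat \oo _ _ (fun k => `|T (T (u2 k)) - T (T (u1 k))|)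
     (fun k => alpha0 * (`|T (u2 k) - T (u1 k)| + `|u2 k - u1 k|))).
  - exact: (cvg_norm (cvgB e2 e1)).
  - apply: cvgMl_tmp; apply: cvgD; apply: cvg_norm; exact: cvgB.
  - by near=> k; apply: Hii.
split => //.
have [x0 Xx0] := Xne.
pose x n := iter n T x0.
have Xx n : X (x n) by elim: n => [|n IH] //=; apply: TX.
have cx : cvgn x.
  apply: (@iter_cvg R Y x alpha0) => // n.
  exact: (Hii (x n) (x n.+1) (Xx n) (Xx n.+1)).
set l := limn x in cx.
have Txl : (fun k => T (x k)) @ \oo --> l.
  by rewrite -(cvg_shiftS x) in cx.
have el : ext_rel X T l l by exists x.
have Xl : X_infty X T l by exists l.
have Tl : That l = l by apply: wd (Hext _ Xl) el.
exists l; split => // W XW TW.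
have := P2 _ _ Xl XW; rewrite !TW !Tl => h.
have d0 : `|W - l| <= 0 by nra.
by apply/eqP; rewrite -subr_eq0 -normr_le0.
Unshelve. all: end_near.
Qed.
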